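(* Let $n \ge 3$. For $n$-simplices in $\mathbb{E}^n$ with vertices labeled $1,\dots,n+1$, let $E = (l_e)_e$ be the vector of the $n(n+1)/2$ edge lengths (indexed by the $2$-element subsets $e$ of $\{1,\dots,n+1\}$) and let $F = (V_S)_S$ be the vector of the $n(n+1)/2$ $(n-2)$-dimensional volumes of the $(n-2)$-dimensional faces (indexed by the $(n-1)$-element subsets $S$ of $\{1,\dots,n+1\}$), regarded as a function of $E$. Let $p_1$ be the edge-length vector of the regular simplex with all edge lengths equal to $1$, and let $J(p_1) = \partial F/\partial E$ be the Jacobian matrix at $p_1$. Let $M$ be the matrix with rows indexed by the $(n-1)$-subsets $S$ and columns indexed by the $2$-subsets $e$, with $M_{S,e} = 1$ if $e \subset S$ (i.e. the edge $e$ is an edge of the face $S$) and $M_{S,e} = 0$ otherwise. Then there is a constant $c \neq 0$ such that $J(p_1) = c\,M$.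
   Context: An $n$-simplex in $\mathbb{E}^n$ is determined up to congruence by its edge lengths, so the face volumes are functions of the edge lengths near $p_1$. *)

(* Defs.v *)
From HB Require Import structures.
From mathcomp Require Import all_boot all_order all_algebra.
From mathcomp Require Import all_classical all_reals all_analysis.
Set Implicit Arguments. Unset Strict Implicit. Unset Printing Implicit Defensive.
Import Order.TTheory GRing.Theory Num.Theory.
Local Open Scope ring_scope.

(* Simplices with vertices labelled by 'I_n.+1 (i.e. 1..n+1 shifted to 0..n).
   An edge-length vector is a function E on subsets of vertices; only its
   values on 2-element subsets (the edges) are used. *)

Definition edist (R : realType) (m : nat) (E : {set 'I_m} -> R) (x y : 'I_m) : R :=
  if x == y then 0 else E [set x; y].

(* Gram matrix of the face S (an (n-1)-subset, i.e. an (n-2)-simplex) with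
   respect to its base vertex b = first element of S: entries
   <v_i - b, v_j - b> = (d(b,v_i)^2 + d(b,v_j)^2 - d(v_i,v_j)^2)/2,
   where v_1, ..., v_{n-2} are the remaining vertices of S. *)
Definition face_gram (R : realType) (n : nat) (E : {set 'I_n.+1} -> R)
    (S : {set 'I_n.+1}) : 'M[R]_(n - 2) :=
  let s := enum S in
  let v := fun k : nat => nth ord0 s k in
  \matrix_(i < n - 2, j < n - 2)
    ((edist E (v 0%N) (v i.+1) ^+ 2 + edist E (v 0%N) (v j.+1) ^+ 2
      - edist E (v i.+1) (v j.+1) ^+ 2) / 2).

Definition face_volume (R : realType) (n : nat) (E : {set 'I_n.+1} -> R)
    (S : {set 'I_n.+1}) : R :=
  Num.sqrt (\det (face_gram E S)) / ((n - 2)`!)%:R.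

Definition regular_lengths (R : realType) (n : nat) : {set 'I_n.+1} -> R :=
  fun _ => 1.

Definition perturb (R : realType) (n : nat) (E : {set 'I_n.+1} -> R)
    (e : {set 'I_n.+1}) (t : R) : {set 'I_n.+1} -> R :=
  fun e' => E e' + (if e' == e then t else 0).

(* Main.v *)
Require Import Defs.
From HB Require Import structures.
From mathcomp Require Import all_boot all_order all_algebra.
From mathcomp Require Import all_classical all_reals all_analysis.
From mathcomp Require Import ring lra zify.
Import Order.TTheory GRing.Theory Num.Theory.
Local Open Scope ring_scope.

Section Alg.
Variable R : realType.

Lemma coef1M (p q : {poly R}) : (p * q)`_1 = p`_0 * q`_1 + p`_1 * q`_0.
Proof. by rewrite coefM big_ord_recr big_ord_recr big_ord0 /= add0r. Qed.

Lemma coef0_prod (I : eqType) (r : seq I) (P : I -> {poly R}) :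
  (\prod_(i <- r) P i)`_0 = \prod_(i <- r) (P i)`_0.
Proof.
elim: r => [|a r IH]; first by rewrite !big_nil coef1.
by rewrite !big_cons coef0M IH.
Qed.

Lemma coef1_prod (I : eqType) (r : seq I) (P : I -> {poly R}) : uniq r ->
  (\prod_(i <- r) P i)`_1 =
  \sum_(k <- r) \prod_(i <- r) (if i == k then (P i)`_1 else (P i)`_0).
Proof.
elim: r => [|a r IH] /=; first by rewrite !big_nil coef1.
case/andP => ar ur.
rewrite big_cons coef1M IH // big_cons big_cons eqxx coef0_prod.
rewrite addrC; congr (_ + _).
  congr (_ * _); rewrite big_seq [RHS]big_seq; apply: eq_bigr => i ir.
  by case: eqP ir ar => // -> ->.
rewrite mulr_sumr [LHS]big_seq [RHS]big_seq; apply: eq_bigr => k kr.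
rewrite big_cons; case: eqP kr ar => [-> -> //|_ _ _]; done.
Qed.

Lemma det_coef1 (m : nat) (M : 'M[{poly R}]_m) :
  (\det M)`_1 = \sum_k \det (\matrix_(i, j) (if i == k then (M i j)`_1 else (M i j)`_0)).
Proof.
rewrite /determinant coef_sum exchange_big /=; apply: eq_bigr => s _.
rewrite -mulr_sumr; case: (perm.odd_perm s); rewrite ?expr1 ?expr0 ?mulN1r ?mul1r ?coefN;
  [congr (- _)|];
  rewrite coef1_prod ?index_enum_uniq //; apply: eq_bigr => k _;
  by apply: eq_bigr => i _; rewrite mxE.
Qed.
Lemma det_rowrep (m : nat) (B C : 'M[R]_m) k :
  \det (\matrix_(i, j) (if i == k then C i j else B i j)) = \sum_j C k j * \adj B j k.
Proof.
rewrite (expand_det_row _ k); apply: eq_bigr => j _.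
rewrite !mxE eqxx /cofactor; congr (_ * (_ * \det _)).
by apply/matrixP => a b; rewrite !mxE eq_sym (negbTE (neq_lift k a)).
Qed.

Definition G0 m : 'M[R]_m := \matrix_(i, j) (if i == j then 1 else 2^-1).
Definition Ginv m : 'M[R]_m := \matrix_(i, j) (2 * ((i == j)%:R - (m.+1%:R)^-1)).

Lemma sum_delta m (j : 'I_m) : \sum_(k < m) ((k == j)%:R : R) = 1.
Proof. by rewrite (bigD1 j) //= eqxx big1 ?addr0 // => k /negbTE ->. Qed.

Lemma sum_delta2 m (i j : 'I_m) :
  \sum_(k < m) ((i == k)%:R * (k == j)%:R : R) = (i == j)%:R.
Proof.
rewrite (bigD1 i) //= eqxx mul1r big1 ?addr0 //.
by move=> k; rewrite eq_sym => /negbTE ->; rewrite mul0r.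
Qed.

Lemma nz1 m : (1 + m%:R : R) != 0.
Proof. by rewrite addrC natr1 pnatr_eq0. Qed.

Lemma G0Ginv m : G0 m *m Ginv m = 1%:M.
Proof.
apply/matrixP => i j; rewrite !mxE.
have -> : \sum_k G0 m i k * Ginv m k j =
   \sum_k ((k == j)%:R - (m.+1%:R)^-1 + (i == k)%:R * (k == j)%:R - (i == k)%:R * (m.+1%:R)^-1).
  apply: eq_bigr => k _; rewrite !mxE; case: (i =P k) => _ /=; field; exact: nz1.
rewrite !big_split /= !sumrN sum_delta sum_delta2 -mulr_suml.
under [X in X / _]eq_bigr do rewrite eq_sym.
rewrite sum_delta sumr_const card_ord.
have h : (m.+1%:R : R) != 0 by rewrite pnatr_eq0.
rewrite -mulr_natr -[m.+1]addn1 natrD in h *.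
by case: (i == j); rewrite /= ?mulr1n ?mulr0n; field.
Qed.

Lemma adjG0 m : \adj (G0 m) = \det (G0 m) *: Ginv m.
Proof.
rewrite -[\adj _]mulmx1 -G0Ginv mulmxA mul_adj_mx.
by rewrite mul_scalar_mx.
Qed.
Lemma detG0_neq0 m : \det (G0 m) != 0.
Proof.
apply/negP => /eqP h; have := congr1 determinant (G0Ginv m).
by rewrite det_mulmx h mul0r det1 => /eqP; rewrite eq_sym oner_eq0.
Qed.

Lemma detG0_ge0 m : (0 < m)%N -> 0 <= \det (G0 m).
Proof.
move=> m0.
pose r : R := Num.sqrt (m.+1%:R).
have hr : r ^+ 2 = m.+1%:R by rewrite sqr_sqrtr // ler0n.
have hm : (m%:R : R) != 0 by rewrite pnatr_eq0 -lt0n.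
pose c : R := (r - 1) / m%:R.
have hc : m%:R * c ^+ 2 + 2 * c = 1.
  rewrite /c; apply: (mulfI hm); rewrite mulr1 mulrDr.
  have -> : m%:R * (m%:R * ((r - 1) / m%:R) ^+ 2) = (r - 1) ^+ 2.
    by field.
  have -> : m%:R * (2 * ((r - 1) / m%:R)) = 2 * (r - 1) by field.
  rewrite sqrrB hr -natr1; ring.
clearbody c.
pose H : 'M[R]_m := \matrix_(i, j) ((i == j)%:R + c).
have -> : G0 m = 2^-1 *: (H *m H).
  apply/matrixP => i j; rewrite !mxE.
  have -> : \sum_k H i k * H k j =
     \sum_k ((i == k)%:R * (k == j)%:R + c * (i == k)%:R + c * (k == j)%:R + c ^+ 2).
    by apply: eq_bigr => k _; rewrite !mxE; ring.
  rewrite !big_split /= sum_delta2 -!mulr_sumr sum_delta.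
  under [X in c * X]eq_bigr do rewrite eq_sym.
  rewrite sum_delta sumr_const card_ord -mulr_natl.
  have hc' : c * (c *+ m) = 1 - 2 * c.
    by rewrite mulrnAr -mulr_natl; apply: (addIr (2 * c)); rewrite subrK -expr2.
  by rewrite hc'; case: (i =P j) => _ /=; field.
rewrite detZ det_mulmx -expr2; apply: mulr_ge0; last exact: sqr_ge0.
by apply: exprn_ge0; rewrite invr_ge0 ler0n.
Qed.

Lemma detG0_gt0 m : (0 < m)%N -> 0 < \det (G0 m).
Proof. by move=> m0; rewrite lt_def detG0_neq0 detG0_ge0. Qed.
Lemma trace_sum m (f : 'I_m -> R) (g : 'I_m -> 'I_m -> R) :
  (forall k, g k k = 0) ->
  \sum_k \sum_j (f k + f j - g k j) * Ginv m j k =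
  2 / m.+1%:R * (2 * \sum_k f k + \sum_k \sum_j g k j).
Proof.
move=> g0.
have e1 k : \sum_j (f k + f j - g k j) * Ginv m j k =
   2 * (2 * f k) - 2 / m.+1%:R * (m%:R * f k + \sum_j f j - \sum_j g k j).
  have -> : \sum_j (f k + f j - g k j) * Ginv m j k =
    \sum_j (2 * ((f k + f j - g k j) * (j == k)%:R)) -
    \sum_j (2 / m.+1%:R * (f k + f j - g k j)).
    rewrite -sumrB; apply: eq_bigr => j _; rewrite mxE; ring.
  rewrite -!mulr_sumr; congr (_ * _ - _ * _).
    rewrite (bigD1 k) //= eqxx mulr1 g0 subr0 big1 ?addr0; first ring.
    by move=> j /negbTE ->; rewrite mulr0.
  by rewrite !big_split /= sumrN sumr_const card_ord mulr_natl.
rewrite (eq_bigr _ (fun k _ => e1 k)) sumrB -!mulr_sumr !big_split /= sumrN.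
rewrite -mulr_sumr sumr_const card_ord.
have h : (m.+1%:R : R) != 0 by rewrite pnatr_eq0.
rewrite -mulr_natl -[m.+1]addn1 natrD in h *.
field. by rewrite addrC.
Qed.
Lemma sqrt_poly_deriv (p : {poly R}) (k : R) : 0 < p.[0] ->
  derivable (fun t => Num.sqrt p.[t] / k) 0 1 /\
  derive1 (fun t => Num.sqrt p.[t] / k) 0 = p`_1 / (2 * Num.sqrt p.[0]) / k.
Proof.
move=> p0.
have H1 : is_derive (0:R) (1:R) (Num.sqrt \o horner p)
   ((2 * Num.sqrt p.[0])^-1 * p^`().[0]).
  apply: is_derive1_comp.
  exact: is_derive1_sqrt.
have H2 := @is_deriveZ _ _ _ (Num.sqrt \o horner p) k^-1 0 1 _ H1.
have -> : (fun t => Num.sqrt p.[t] / k) = k^-1 *: (Num.sqrt \o horner p).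
  by apply/funext => t /=; rewrite /= mulrC.
split; first exact: ex_derive.
rewrite derive1E derive_val [p^`().[0]]horner_coef0 coef_deriv mulr1n.
by rewrite /GRing.scale /=; ring.
Qed.
End Alg.

Section Geo.
Variable R : realType.
Variable n : nat.

Definition vv (S : {set 'I_n.+1}) (k : nat) := nth ord0 (enum S) k.
Definition bb (e : {set 'I_n.+1}) (x y : 'I_n.+1) : R := ([set x; y] == e)%:R.
Definition dp (e : {set 'I_n.+1}) (x y : 'I_n.+1) : {poly R} :=
  if x == y then 0 else 1 + (bb e x y)%:P * 'X.
Definition GP (e S : {set 'I_n.+1}) : 'M[{poly R}]_(n - 2) :=
  \matrix_(i, j) ((dp e (vv S 0) (vv S i.+1) ^+ 2 + dp e (vv S 0) (vv S j.+1) ^+ 2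
      - dp e (vv S i.+1) (vv S j.+1) ^+ 2) * (2^-1)%:P).

Lemma edist_eval e t x y :
  Defs.edist (perturb (@regular_lengths R n) e t) x y = (dp e x y).[t].
Proof.
rewrite /Defs.edist /dp /perturb /regular_lengths /bb; case: (x == y); first by rewrite horner0.
by case: ([set x; y] == e); rewrite !hornerE.
Qed.

Lemma gram_eval e S t :
  face_gram (perturb (@regular_lengths R n) e t) S = map_mx (horner_eval t) (GP e S).
Proof.
apply/matrixP => i j; rewrite !mxE /= !edist_eval.
by rewrite /horner_eval !hornerE.
Qed.

Lemma vol_eval e S t :
  face_volume (perturb (@regular_lengths R n) e t) S =
  Num.sqrt (\det (GP e S)).[t] / ((n - 2)`!)%:R.
Proof. by rewrite /face_volume gram_eval det_map_mx. Qed.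

Lemma bb_xx (e : {set 'I_n.+1}) x : #|e| = 2%N -> bb e x x = 0.
Proof.
move=> he; rewrite /bb.
have -> : [set x; x] = [set x] by apply/setP => z; rewrite !inE orbb.
case: eqP => // h.
by move: he; rewrite -h cards1.
Qed.

Lemma bbC e x y : bb e x y = bb e y x.
Proof. by rewrite /bb; congr ((_ == _)%:R); apply/setP => z; rewrite !inE orbC. Qed.

Lemma dp_coef0 e x y : (dp e x y)`_0 = (x != y)%:R.
Proof.
rewrite /dp; case: (x == y); first by rewrite coef0.
by rewrite coefD coef1 coefCM coefX mulr0 addr0.
Qed.

Lemma dp_coef1 (e : {set 'I_n.+1}) x y : #|e| = 2%N -> (dp e x y)`_1 = bb e x y.
Proof.
move=> he; rewrite /dp; case: eqP => [->|_]; first by rewrite coef0 bb_xx.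
by rewrite coefD coef1 coefCM coefX mulr1 add0r.
Qed.

Lemma sq_coef0 (p : {poly R}) : (p ^+ 2)`_0 = p`_0 ^+ 2.
Proof. by rewrite !expr2 coef0M. Qed.

Lemma sq_coef1 (p : {poly R}) : (p ^+ 2)`_1 = 2 * p`_0 * p`_1.
Proof. by rewrite expr2 coef1M; ring. Qed.

Lemma vv_eq (S : {set 'I_n.+1}) (hS : #|S| = n.-1) i j : (i < n.-1)%N -> (j < n.-1)%N ->
  (vv S i == vv S j) = (i == j).
Proof. by move=> hi hj; rewrite /vv nth_uniq ?enum_uniq // -cardE hS. Qed.

Lemma GP_coef0 (e S : {set 'I_n.+1}) : (3 <= n)%N -> #|S| = n.-1 ->
  \matrix_(i, j) ((GP e S i j)`_0) = G0 R (n - 2).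
Proof.
move=> hn hS; apply/matrixP => i j; rewrite !mxE coefMC coefB coefD !sq_coef0 !dp_coef0.
have hi : (i.+1 < n.-1)%N by have := ltn_ord i; lia.
have hj : (j.+1 < n.-1)%N by have := ltn_ord j; lia.
have h0 : (0 < n.-1)%N by lia.
rewrite !vv_eq //= eqSS.
have ev : ((i : nat) == j) = (i == j) by [].
rewrite ev; case: (i == j); rewrite /=. all: by field.
Qed.

Lemma neq_bb (e : {set 'I_n.+1}) x y : #|e| = 2%N -> (x != y)%:R * bb e x y = bb e x y.
Proof. by move=> he; case: eqP => [->|_]; rewrite ?bb_xx ?mulr0 ?mul1r. Qed.

Lemma GP_coef1 (e S : {set 'I_n.+1}) i j : #|e| = 2%N ->
  (GP e S i j)`_1 = bb e (vv S 0) (vv S i.+1) + bb e (vv S 0) (vv S j.+1)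
      - bb e (vv S i.+1) (vv S j.+1).
Proof.
move=> he; rewrite !mxE coefMC coefB coefD !sq_coef1 !dp_coef0 !dp_coef1 //.
by rewrite -!mulrA !neq_bb //; field.
Qed.
Lemma set2_eqE (a b x y : 'I_n.+1) : a != b ->
  ([set x; y] == [set a; b]) = ((x == a) && (y == b)) || ((x == b) && (y == a)).
Proof.
move=> ab; apply/eqP/idP => [h|].
  have ha : a \in [set x; y] by rewrite h !inE eqxx.
  have hb : b \in [set x; y] by rewrite h !inE eqxx orbT.
  have hx : x \in [set a; b] by rewrite -h !inE eqxx.
  have hy : y \in [set a; b] by rewrite -h !inE eqxx orbT.
  move: ha hb; move: hx hy; rewrite !inE.
  case/orP => /eqP ->; case/orP => /eqP ->; rewrite ?eqxx ?orbT ?orbb //.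
    by move=> _ /eqP e; rewrite e eqxx in ab.
  by move=> /eqP e; rewrite e eqxx in ab.
case/orP => /andP[/eqP -> /eqP ->] //.
by apply/setP => z; rewrite !inE orbC.
Qed.

Lemma sum_in_delta (S : {set 'I_n.+1}) b : \sum_(y in S) ((y == b)%:R : R) = (b \in S)%:R.
Proof.
case: (boolP (b \in S)) => hb.
  rewrite (bigD1 b) //= eqxx big1 ?addr0 // => y /andP[_ /negbTE ->] //.
rewrite big1 // => y yS; case: eqP => // ey.
by rewrite -ey yS in hb.
Qed.

Lemma sum_pair (S : {set 'I_n.+1}) (a b : 'I_n.+1) :
  \sum_(x in S) \sum_(y in S) (((x == a) && (y == b))%:R : R) = ((a \in S) && (b \in S))%:R.
Proof.
under eq_bigr do under eq_bigr do rewrite -mulnb natrM.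
under eq_bigr do rewrite -mulr_sumr sum_in_delta.
by rewrite -mulr_suml sum_in_delta -natrM mulnb.
Qed.

Lemma sum_bb (e S : {set 'I_n.+1}) : #|e| = 2%N ->
  \sum_(x in S) \sum_(y in S) bb e x y = 2 * (e \subset S)%:R.
Proof.
move=> /eqP /cards2P [a [b [ab ->]]].
have hbb : forall x y, bb [set a; b] x y =
    ((x == a) && (y == b))%:R + ((x == b) && (y == a))%:R.
  move=> x y; rewrite /bb set2_eqE //.
  case: (x =P a) => [->|_]; case: (y =P b) => [->|_]; rewrite /= ?add0r ?addr0 //.
  by rewrite (negbTE ab) eq_sym (negbTE ab) /= addr0.
under eq_bigr do under eq_bigr do rewrite hbb.
under eq_bigr do rewrite big_split /=.
rewrite big_split /= !sum_pair.
rewrite (_ : [set a; b] \subset S = (a \in S) && (b \in S)).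
  by rewrite andbC; case: (_ && _); rewrite /= ?mulr1 ?mulr0 ?addr0 //; ring.
by rewrite finset.subUset !finset.sub1set.
Qed.
Lemma sum_vv (S : {set 'I_n.+1}) (F : 'I_n.+1 -> R) : #|S| = (n - 2).+1 ->
  \sum_(x < (n - 2).+1) F (vv S x) = \sum_(x in S) F x.
Proof. by move=> hS; rewrite -[RHS]big_enum /= [RHS](big_nth ord0) -cardE hS big_mkord. Qed.

Lemma count_main (e S : {set 'I_n.+1}) : (3 <= n)%N -> #|S| = n.-1 -> #|e| = 2%N ->
  2 * \sum_(k < n - 2) bb e (vv S 0) (vv S k.+1)
  + \sum_(k < n - 2) \sum_(j < n - 2) bb e (vv S k.+1) (vv S j.+1)
  = 2 * (e \subset S)%:R.
Proof.
move=> hn hS he.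
have hS' : #|S| = (n - 2).+1 by lia.
rewrite -(sum_bb e S he) -(sum_vv S (fun x => \sum_(y in S) bb e x y) hS').
under [RHS]eq_bigr => i _ do rewrite -(sum_vv S (bb e (vv S i)) hS').
rewrite big_ord_recl big_ord_recl /= bb_xx // add0r.
under [X in _ = _ + X]eq_bigr do rewrite big_ord_recl.
rewrite big_split /=.
have E1 : \sum_(i < n - 2) bb e (vv S (bump 0 i)) (vv S 0) =
   \sum_(k < n - 2) bb e (vv S 0) (vv S k.+1) by apply: eq_bigr => i _; rewrite bbC.
rewrite E1.
set A := \sum_(k < n - 2) bb e (vv S 0) (vv S k.+1).
set B := \sum_(k < n - 2) \sum_(j < n - 2) bb e (vv S k.+1) (vv S j.+1).
change (2 * A + B = A + (A + B)); ring.
Qed.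
End Geo.

Arguments GP {R n}.
Arguments vv {n}.
Arguments bb {R n}.

Lemma det_coef0 (R : realType) m (M : 'M[{poly R}]_m) :
  (\det M).[0] = \det (\matrix_(i, j) (M i j)`_0).
Proof.
have -> : \matrix_(i, j) (M i j)`_0 = map_mx (horner_eval 0) M.
  by apply/matrixP => i j; rewrite !mxE /horner_eval horner_coef0.
by rewrite det_map_mx.
Qed.

Theorem mainTheorem2 (R : realType) (n : nat) (hn : (3 <= n)%N) :
  exists c : R, c != 0 /\
    forall S e : {set 'I_n.+1}, #|S| = n.-1 -> #|e| = 2%N ->
      derivable (fun t : R => face_volume (perturb (@regular_lengths R n) e t) S) 0 1 /\
      derive1 (fun t : R => face_volume (perturb (@regular_lengths R n) e t) S) 0
        = c * (e \subset S)%:R.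
Proof.
have m0 : (0 < n - 2)%N by lia.
set D := \det (G0 R (n - 2)).
have D0 : 0 < D := @detG0_gt0 R (n - 2) m0.
have sD0 : 0 < Num.sqrt D by rewrite sqrtr_gt0.
have f0 : 0 < ((n - 2)`!)%:R :> R by rewrite ltr0n fact_gt0.
exists (D * (2 / (n - 2).+1%:R) * 2 / (2 * Num.sqrt D) / ((n - 2)`!)%:R).
split.
  rewrite gt_eqF //; apply: divr_gt0 => //; apply: divr_gt0; last by rewrite mulr_gt0.
  by rewrite !mulr_gt0 // invr_gt0 ltr0n.
move=> S e hS he.
have -> : (fun t : R => face_volume (perturb (@regular_lengths R n) e t) S) =
  (fun t => Num.sqrt (\det (GP e S)).[t] / ((n - 2)`!)%:R).
  by apply/funext => t; rewrite vol_eval.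
have p0 : (\det (GP e S)).[0] = D by rewrite det_coef0 GP_coef0.
have hp0 : 0 < (\det (@GP R n e S)).[0] by rewrite p0.
have [hd ->] := @sqrt_poly_deriv R _ ((n - 2)`!)%:R hp0.
split => //.
rewrite p0 det_coef1.
pose f (k : 'I_(n - 2)) := @bb R n e (vv S 0) (vv S k.+1).
pose g (k j : 'I_(n - 2)) := @bb R n e (vv S k.+1) (vv S j.+1).
have hk k : \det (\matrix_(i, j) (if i == k then (GP e S i j)`_1 else (GP e S i j)`_0))
    = \sum_j (f k + f j - g k j) * (D * Ginv R (n - 2) j k).
  have -> : \matrix_(i, j) (if i == k then (GP e S i j)`_1 else (GP e S i j)`_0) =
    \matrix_(i, j) (if i == k then (\matrix_(a, b) (GP e S a b)`_1) i j
                    else (\matrix_(a, b) (GP e S a b)`_0) i j) :> 'M[R]_(n - 2).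
    by apply/matrixP => i j; rewrite !mxE.
  rewrite det_rowrep GP_coef0 // adjG0; apply: eq_bigr => j _.
  by rewrite mxE GP_coef1 // !mxE.
rewrite (eq_bigr _ (fun k _ => hk k)).
under eq_bigr do under eq_bigr do rewrite mulrCA.
under eq_bigr do rewrite -mulr_sumr.
rewrite -mulr_sumr trace_sum; last by move=> k; rewrite /g bb_xx.
rewrite count_main //.
have h1 : (n - 2).+1%:R != 0 :> R by rewrite pnatr_eq0.
have h2 : Num.sqrt D != 0 by rewrite gt_eqF.
have h3 : ((n - 2)`!)%:R != 0 :> R by rewrite gt_eqF.
by field; rewrite h2 h3 nz1.
Qed.
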